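(* For every integer $n\ge 0$, $$\Phi^{(2)}[aq^n; b, b'; c, c'; x, y] = \sum_{k=0}^n \sum_{i=0}^k \begin{bmatrix} n \\ k \end{bmatrix} \begin{bmatrix} k \\ i \end{bmatrix} \frac{(b; q)_{k-i} (b'; q)_i}{(c; q)_{k-i} (c'; q)_i} q^{2\binom{k}{2}} a^k x^{k-i} y^i\, \Phi^{(2)}[aq^k; bq^{k-i}, b'q^i; cq^{k-i}, c'q^i; xq^i, y]$$ and $$\Phi^{(2)}[aq^{-n}; b, b'; c, c'; x, y] = \sum_{k=0}^n \sum_{i=0}^k \begin{bmatrix} n \\ k \end{bmatrix} \begin{bmatrix} k \\ i \end{bmatrix} \frac{(b; q)_{k-i} (b'; q)_i}{(c; q)_{k-i} (c'; q)_i} q^{\binom{k}{2} - nk} (-a)^k x^{k-i} y^i\, \Phi^{(2)}[a; bq^{k-i}, b'q^i; cq^{k-i}, c'q^i; xq^i, y].$$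
   Context: Let $q$ be a complex number with $0<|q|<1$. For complex $z$ and integer $m\ge 0$, $(z;q)_m=\prod_{j=0}^{m-1}(1-zq^j)$, with $(z;q)_0=1$. For integers $0\le k\le n$, $\begin{bmatrix} n \\ k \end{bmatrix}=\frac{(q;q)_n}{(q;q)_k(q;q)_{n-k}}$ is the $q$-binomial coefficient. The $q$-Appell function $\Phi^{(2)}$ is $$\Phi^{(2)}[a; b, b'; c, c'; x, y] = \sum_{m, n \geq 0} \frac{(a; q)_{m+n} (b; q)_m (b'; q)_n}{(q; q)_m (q; q)_n (c; q)_m (c'; q)_n} x^m y^n.$$ Identities are understood as identities of power series in $x,y$ (formal, or convergent for small $|x|,|y|$), with complex parameters chosen so that no denominator occurring vanishes. *)

(* Defs.v *)
From mathcomp Require Import all_boot all_algebra.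
From mathcomp Require Export complex reals.
Set Implicit Arguments. Unset Strict Implicit. Unset Printing Implicit Defensive.
Import GRing.Theory Num.Theory.
Local Open Scope ring_scope.

Section Defs.
Variable F : fieldType.

Definition qpoch (z q : F) (m : nat) : F :=
  \prod_(j < m) (1 - z * q ^+ j).

Definition qbinom (q : F) (n k : nat) : F :=
  qpoch q q n / (qpoch q q k * qpoch q q (n - k)).

(* Bivariate formal power series in X, Y are represented by their coefficient
   functions: s m n = coefficient of X^m Y^n. *)

(* Coefficient of X^m Y^n in Phi^(2)[a; b, b'; c, c'; sx*X, sy*Y]. *)
Definition phi2 (q a b b' c c' sx sy : F) (m n : nat) : F :=
  qpoch a q (m + n) * qpoch b q m * qpoch b' q n
  / (qpoch q q m * qpoch q q n * qpoch c q m * qpoch c' q n)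
  * sx ^+ m * sy ^+ n.

(* Multiplication of a formal series s by the monomial X^u Y^v. *)
Definition mulXY (u v : nat) (s : nat -> nat -> F) (m n : nat) : F :=
  if (u <= m)%N && (v <= n)%N then s (m - u)%N (n - v)%N else 0.

End Defs.

(* Main.v *)
Require Import Defs.
From mathcomp Require Import all_boot all_algebra.
From mathcomp Require Import complex reals.
From mathcomp Require Import ring zify order.
Import Order.TTheory GRing.Theory Num.Theory.
Set Implicit Arguments. Unset Strict Implicit.
Local Open Scope ring_scope.

Lemma qpochS (F : fieldType) (z q : F) m :
  qpoch z q m.+1 = qpoch z q m * (1 - z * q ^+ m).
Proof. by rewrite /qpoch big_ord_recr. Qed.

Lemma qpochSl (F : fieldType) (z q : F) m :
  qpoch z q m.+1 = (1 - z) * qpoch (z * q) q m.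
Proof.
rewrite /qpoch big_ord_recl expr0 mulr1; congr (_ * _).
by apply: eq_bigr => j _; rewrite /bump /= exprS mulrA.
Qed.

Lemma qpochD (F : fieldType) (z q : F) m p :
  qpoch z q (m + p) = qpoch z q m * qpoch (z * q ^+ m) q p.
Proof.
rewrite /qpoch big_split_ord; congr (_ * _).
by apply: eq_bigr => j _; rewrite /= exprD mulrA.
Qed.

Lemma qpoch0 (F : fieldType) (z q : F) : qpoch z q 0 = 1.
Proof. by rewrite /qpoch big_ord0. Qed.

Definition ff (F : fieldType) (q : F) (L k : nat) : F :=
  \prod_(j < k) (1 - q ^+ (L - j)).

Lemma ffS (F : fieldType) (q : F) L k : ff q L k.+1 = ff q L k * (1 - q ^+ (L - k)).
Proof. by rewrite /ff big_ord_recr. Qed.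

Lemma ff0 (F : fieldType) (q : F) L : ff q L 0 = 1.
Proof. by rewrite /ff big_ord0. Qed.

Lemma ff_big (F : fieldType) (q : F) L k : (L < k)%N -> ff q L k = 0.
Proof.
elim: k => [//|k IH] Hk; rewrite ffS.
case: (ltngtP L k) => H.
- by rewrite IH // mul0r.
- lia.
- by rewrite H subnn expr0 subrr mulr0.
Qed.

Lemma qpS (F : fieldType) (q : F) m : qpoch q q m.+1 = qpoch q q m * (1 - q ^+ m.+1).
Proof. by rewrite qpochS exprS. Qed.

Lemma qp_neq0 (F : fieldType) (q : F) (hq : forall j, 1 - q ^+ j.+1 != 0) m :
  qpoch q q m != 0.
Proof. elim: m => [|m IH]; first by rewrite qpoch0 oner_neq0.
by rewrite qpS mulf_neq0. Qed.

Lemma ff_qp (F : fieldType) (q : F) M u : (u <= M)%N ->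
  ff q M u * qpoch q q (M - u) = qpoch q q M.
Proof.
elim: u => [|u IH] Hu; first by rewrite ff0 mul1r subn0.
rewrite ffS -IH; last lia.
have -> : (M - u = (M - u.+1).+1)%N by lia.
rewrite qpS; ring.
Qed.

Definition gb (F : fieldType) (q : F) (n k : nat) : F :=
  if (k <= n)%N then qbinom q n k else 0.

Lemma gb_big (F : fieldType) (q : F) n k : (n < k)%N -> gb q n k = 0.
Proof. by rewrite /gb ltnNge => /negbTE ->. Qed.

Lemma gb_n0 (F : fieldType) (q : F) (hq : forall j, 1 - q ^+ j.+1 != 0) n :
  gb q n 0 = 1.
Proof. rewrite /gb /qbinom /= qpoch0 subn0 mul1r divff //; exact: qp_neq0. Qed.

Lemma gb_nn (F : fieldType) (q : F) (hq : forall j, 1 - q ^+ j.+1 != 0) n :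
  gb q n n = 1.
Proof. rewrite /gb /qbinom leqnn subnn qpoch0 mulr1 divff //; exact: qp_neq0. Qed.

Lemma pascal1 (F : fieldType) (q : F) (hq : forall j, 1 - q ^+ j.+1 != 0) n k :
  gb q n.+1 k.+1 = gb q n k + q ^+ k.+1 * gb q n k.+1.
Proof.
case: (ltngtP k n) => H.
- rewrite /gb /qbinom ltnS (ltnW H) H subSS.
  have [d ->] : exists d, n = (k + d.+1)%N by exists (n - k.+1)%N; lia.
  have -> : (k + d.+1 - k = d.+1)%N by lia.
  have -> : (k + d.+1 - k.+1 = d)%N by lia.
  rewrite !qpS.
  have h1 := qp_neq0 hq k; have h2 := qp_neq0 hq d; have h3 := qp_neq0 hq (k + d.+1).
  have h4 := hq k; have h5 := hq d.
  have -> : (k + d.+1).+1 = (k.+1 + d.+1)%N by lia.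
  rewrite exprD.
  move: h1 h2 h3 h4 h5; move: (qpoch q q k) (qpoch q q d) (qpoch q q (k + d.+1)) (q ^+ k.+1) (q ^+ d.+1).
  move=> A B C x y hA hB hC hx hy.
  field; by rewrite hA hB hx hy.
- by rewrite !gb_big // ?mul0r ?mulr0 ?addr0 //; lia.
- by rewrite H gb_nn // gb_nn // gb_big // mulr0 addr0.
Qed.

Lemma pascal2 (F : fieldType) (q : F) (hq : forall j, 1 - q ^+ j.+1 != 0) n k :
  gb q n.+1 k.+1 = q ^+ (n - k) * gb q n k + gb q n k.+1.
Proof.
case: (ltngtP k n) => H.
- rewrite /gb /qbinom ltnS (ltnW H) H subSS.
  have [d ->] : exists d, n = (k + d.+1)%N by exists (n - k.+1)%N; lia.
  have -> : (k + d.+1 - k = d.+1)%N by lia.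
  have -> : (k + d.+1 - k.+1 = d)%N by lia.
  rewrite !qpS.
  have h1 := qp_neq0 hq k; have h2 := qp_neq0 hq d; have h3 := qp_neq0 hq (k + d.+1).
  have h4 := hq k; have h5 := hq d.
  have -> : (k + d.+1).+1 = (k.+1 + d.+1)%N by lia.
  rewrite exprD.
  move: h1 h2 h3 h4 h5; move: (qpoch q q k) (qpoch q q d) (qpoch q q (k + d.+1)) (q ^+ k.+1) (q ^+ d.+1).
  move=> A B C x y hA hB hC hx hy.
  field; by rewrite hA hB hx hy.
- by rewrite !gb_big // ?mul0r ?mulr0 ?addr0 //; lia.
- by rewrite H gb_nn // gb_nn // gb_big // subnn expr0 mulr1 addr0.
Qed.

Definition X1 (F : fieldType) (q a : F) (L k : nat) : F :=
  ff q L k * q ^+ (2 * 'C(k, 2)) * a ^+ k * qpoch (a * q ^+ k) q (L - k).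

Lemma C2S k : (2 * 'C(k.+1, 2) = 2 * 'C(k, 2) + k + k)%N.
Proof. rewrite binS bin1; lia. Qed.

Lemma key1 (F : fieldType) (q a : F) L k :
  X1 q (a * q) L k = q ^+ k * X1 q a L k + X1 q a L k.+1.
Proof.
rewrite /X1 ffS C2S.
have -> : q ^+ (2 * 'C(k, 2) + k + k) = q ^+ (2 * 'C(k, 2)) * q ^+ k * q ^+ k by rewrite !exprD.
rewrite exprMn -[a * q * q ^+ k]mulrA -exprS.
case: (ltnP k L) => H.
- have [m ->] : exists m, L = (k + m.+1)%N by exists (L - k.+1)%N; lia.
  have -> : (k + m.+1 - k = m.+1)%N by lia.
  have -> : (k + m.+1 - k.+1 = m)%N by lia.
  rewrite [qpoch (a * q ^+ k) _ _]qpochSl [qpoch (a * q ^+ k.+1) q m.+1]qpochS -[a * q ^+ k * q]mulrA -exprSr.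
  rewrite !exprS.
  move: (ff q (k + m.+1) k) (q ^+ (2 * 'C(k, 2))) (qpoch (a * (q * q ^+ k)) q m) (q ^+ k) (q ^+ m) (a ^+ k).
  move=> f Q P t s A; ring.
- have -> : (L - k = 0)%N by lia.
  have -> : (L - k.+1 = 0)%N by lia.
  rewrite !qpoch0 expr0 subrr.
  move: (ff q L k) (q ^+ (2 * 'C(k, 2))) (q ^+ k) (a ^+ k) => f Q t A; ring.
Qed.

Lemma id1 (F : fieldType) (q : F) (hq : forall j, 1 - q ^+ j.+1 != 0) n :
  forall a L, qpoch (a * q ^+ n) q L = \sum_(k < n.+1) gb q n k * X1 q a L k.
Proof.
elim: n => [|n IH] a L.
  by rewrite big_ord1 gb_n0 // /X1 ff0 !expr0 mul1r !mulr1 subn0 mul1r.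
rewrite exprS mulrA IH.
rewrite [RHS]big_ord_recl gb_n0 // mul1r.
rewrite [in RHS](eq_bigr (fun i : 'I_n.+1 => gb q n i * X1 q a L i.+1 +
   q ^+ i.+1 * gb q n i.+1 * X1 q a L i.+1)); last first.
  by move=> i _; rewrite /bump /= pascal1 // mulrDl mulrA.
rewrite big_split /= addrCA.
have -> : X1 q a L 0 + \sum_(i < n.+1) q ^+ i.+1 * gb q n i.+1 * X1 q a L i.+1
    = \sum_(i < n.+1) q ^+ i * gb q n i * X1 q a L i.
  transitivity (\sum_(i < n.+2) q ^+ i * gb q n i * X1 q a L i).
    by rewrite [RHS]big_ord_recl /= expr0 gb_n0 // !mul1r.
  by rewrite big_ord_recr /= gb_big // mulr0 mul0r addr0.
rewrite -big_split /=; apply: eq_bigr => k _.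
rewrite key1; ring.
Qed.

Definition X2 (F : fieldType) (q a : F) (L k : nat) : F :=
  ff q L k * q ^+ 'C(k, 2) * (- a) ^+ k * qpoch a q (L - k).

Lemma key2 (F : fieldType) (q a : F) (hq0 : q != 0) L k :
  X2 q (a / q) L k = X2 q a L k / q ^+ k + X2 q a L k.+1 / q ^+ (2 * k + 1).
Proof.
rewrite /X2 ffS binS bin1 exprD -mulNr expr_div_n.
have -> : q ^+ (2 * k + 1) = q ^+ k * q ^+ k * q by rewrite exprD expr1 mul2n -addnn exprD.
have hk : q ^+ k != 0 by rewrite expf_neq0.
case: (ltnP k L) => H.
- have [m ->] : exists m, L = (k + m.+1)%N by exists (L - k.+1)%N; lia.
  have -> : (k + m.+1 - k = m.+1)%N by lia.
  have -> : (k + m.+1 - k.+1 = m)%N by lia.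
  rewrite qpochSl divfK // qpochS exprS exprSr.
  move: hk; move: (ff q (k + m.+1) k) (q ^+ 'C(k, 2)) (qpoch a q m) (q ^+ k) (q ^+ m) ((- a) ^+ k).
  move=> f Q P t s A ht; field; by rewrite ht hq0.
- have -> : (L - k = 0)%N by lia.
  have -> : (L - k.+1 = 0)%N by lia.
  rewrite !qpoch0 expr0 subrr.
  move: hk; move: (ff q L k) (q ^+ 'C(k, 2)) (q ^+ k) ((- a) ^+ k) => f Q t A ht.
  field; by rewrite ht hq0.
Qed.

Lemma id2 (F : fieldType) (q : F) (hq0 : q != 0) (hq : forall j, 1 - q ^+ j.+1 != 0) n :
  forall a L, qpoch (a / q ^+ n) q L = \sum_(k < n.+1) gb q n k / q ^+ (n * k) * X2 q a L k.
Proof.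
elim: n => [|n IH] a L.
  by rewrite big_ord1 gb_n0 // /X2 ff0 !expr0 invr1 !mulr1 !mul1r subn0.
rewrite exprS invfM mulrA IH.
rewrite [RHS]big_ord_recl gb_n0 // muln0 expr0 invr1 !mul1r.
rewrite [in RHS](eq_bigr (fun i : 'I_n.+1 =>
   q ^+ (n - i) * gb q n i / q ^+ (n.+1 * i.+1) * X2 q a L i.+1 +
   gb q n i.+1 / q ^+ (n.+1 * i.+1) * X2 q a L i.+1)); last first.
  by move=> i _; rewrite /bump /= pascal2 // !mulrDl mulrA.
rewrite big_split /= addrCA.
have -> : X2 q a L 0 + \sum_(i < n.+1) gb q n i.+1 / q ^+ (n.+1 * i.+1) * X2 q a L i.+1
    = \sum_(i < n.+1) gb q n i / q ^+ (n.+1 * i) * X2 q a L i.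
  transitivity (\sum_(i < n.+2) gb q n i / q ^+ (n.+1 * i) * X2 q a L i).
    by rewrite [RHS]big_ord_recl /= muln0 expr0 invr1 gb_n0 // !mul1r.
  by rewrite big_ord_recr /= gb_big // mul0r mul0r addr0.
rewrite -big_split /=; apply: eq_bigr => [[k hk]] _ /=.
rewrite key2 //.
have -> : (n.+1 * k.+1 = (n - k) + n * k + (2 * k + 1))%N by rewrite ltnS in hk; nia.
have -> : (n.+1 * k = n * k + k)%N by nia.
rewrite !exprD.
have h1 : q ^+ (n - k) != 0 by rewrite expf_neq0.
have h2 : q ^+ (n * k) != 0 by rewrite expf_neq0.
have h3 : q ^+ k != 0 by rewrite expf_neq0.
have h4 : q ^+ (2 * k + 1) != 0 by rewrite expf_neq0.
move: h1 h2 h3 h4; move: (q ^+ (n - k)) (q ^+ (n * k)) (q ^+ k) (q ^+ (2 * k + 1)).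
move=> x y z w hx hy hz hw; field.
by rewrite hx hy hz hq0.
Qed.

Lemma vdm_term (F : fieldType) (q : F) k i M N : (i <= k)%N ->
  gb q k i * ff q M (k - i) * ff q N i * (q ^+ i) ^+ (M - (k - i)) * (1 - q ^+ (M + N - k))
  = gb q k i * ff q M (k - i) * ff q N i.+1 * (q ^+ i.+1) ^+ (M - (k - i))
    + q ^+ i * gb q k i * ff q M (k.+1 - i) * ff q N i * (q ^+ i) ^+ (M - (k.+1 - i)).
Proof.
move=> hik.
rewrite ffS (subSn hik) ffS.
case: (ltnP M (k - i)) => HM.
  by rewrite (ff_big q HM) !(mulr0, mul0r) addr0.
case: (ltnP N i) => HN.
  by rewrite (ff_big q HN) !(mulr0, mul0r) addr0.
have -> : (M + N - k = (M - (k - i)) + (N - i))%N by lia.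
have -> : (M - (k - i).+1 = (M - (k - i)).-1)%N by lia.
move: (M - (k - i))%N => M'.
rewrite exprD.
case: M' => [|m].
  rewrite !expr0 subrr; ring.
rewrite [q ^+ i.+1]exprSr [(_ * q) ^+ m.+1]exprMn [(q ^+ i) ^+ m.+1]exprS /=.
move: (gb q k i) (ff q M (k - i)) (ff q N i) (q ^+ i) ((q ^+ i) ^+ m) (q ^+ m.+1) (q ^+ (N - i)).
move=> g A B T U V W; ring.
Qed.

Lemma vdm (F : fieldType) (q : F) (hq : forall j, 1 - q ^+ j.+1 != 0) k M N :
  \sum_(i < k.+1) gb q k i * ff q M (k - i) * ff q N i * (q ^+ i) ^+ (M - (k - i))
  = ff q (M + N) k.
Proof.
elim: k => [|k IH].
  by rewrite big_ord1 gb_n0 // !ff0 expr0 expr1n !mulr1.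
rewrite ffS -IH big_distrl /=.
rewrite big_ord_recl /= gb_n0 // subn0 ff0 expr0 expr1n !mulr1 mul1r.
rewrite (eq_bigr (fun j : 'I_k.+1 =>
   gb q k j * ff q M (k - j) * ff q N j.+1 * (q ^+ j.+1) ^+ (M - (k - j)) +
   q ^+ j.+1 * gb q k j.+1 * ff q M (k - j) * ff q N j.+1 * (q ^+ j.+1) ^+ (M - (k - j)))); last first.
  by move=> j _; rewrite /bump /= subSS pascal1 // !mulrDl !add1n .
rewrite big_split /= addrCA.
have -> : ff q M k.+1 + \sum_(j < k.+1) q ^+ j.+1 * gb q k j.+1 * ff q M (k - j) * ff q N j.+1 * (q ^+ j.+1) ^+ (M - (k - j))
  = \sum_(i < k.+1) q ^+ i * gb q k i * ff q M (k.+1 - i) * ff q N i * (q ^+ i) ^+ (M - (k.+1 - i)).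
  transitivity (\sum_(i < k.+2) q ^+ i * gb q k i * ff q M (k.+1 - i) * ff q N i * (q ^+ i) ^+ (M - (k.+1 - i))).
    rewrite [RHS]big_ord_recl /= gb_n0 // subn0 ff0 !expr0 expr1n !mulr1 mul1r.
    congr (_ + _); apply: eq_bigr => j _; by rewrite /bump /= subSS.
  by rewrite big_ord_recr /= gb_big // mulr0 !mul0r addr0.
rewrite -big_split /=; apply: eq_bigr => [[i hi]] _ /=.
by rewrite vdm_term.
Qed.

Lemma term_eq (F : fieldType) (q b b' c c' Ak s : F)
  (hq : forall j, 1 - q ^+ j.+1 != 0)
  (hc : forall m, qpoch c q m != 0) (hc' : forall m, qpoch c' q m != 0) k i M N :
  (i <= k)%N ->
  s * qbinom q k i * (qpoch b q (k - i) * qpoch b' q i / (qpoch c q (k - i) * qpoch c' q i)) *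
  mulXY (k - i) i (phi2 q Ak (b * q ^+ (k - i)) (b' * q ^+ i) (c * q ^+ (k - i)) (c' * q ^+ i) (q ^+ i) 1) M N
  = s * (qpoch b q M * qpoch b' q N / (qpoch c q M * qpoch c' q N)) / (qpoch q q M * qpoch q q N)
    * qpoch Ak q (M + N - k) * (gb q k i * ff q M (k - i) * ff q N i * (q ^+ i) ^+ (M - (k - i))).
Proof.
move=> hik; rewrite /mulXY.
case: ifP => [/andP [h1 h2] | h].
- have [M' EM] : exists M', M = (k - i + M')%N by exists (M - (k - i))%N; lia.
  have [N' EN] : exists N', N = (i + N')%N by exists (N - i)%N; lia.
  have -> : (M + N - k = M' + N')%N by lia.
  rewrite EM EN !addKn /gb hik.
  have hfM : ff q (k - i + M') (k - i) = qpoch q q (k - i + M') / qpoch q q M'.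
    by rewrite -(ff_qp q (leq_addr M' (k - i))) addKn mulfK // qp_neq0.
  have hfN : ff q (i + N') i = qpoch q q (i + N') / qpoch q q N'.
    by rewrite -(ff_qp q (leq_addr N' i)) addKn mulfK // qp_neq0.
  rewrite hfM hfN /phi2 expr1n mulr1.
  have hc1 := hc (k - i + M')%N; have hc2 := hc' (i + N')%N.
  rewrite !qpochD in hc1 hc2.
  rewrite (qpochD b) (qpochD b') (qpochD c) (qpochD c').
  have hq1 := qp_neq0 hq M'; have hq2 := qp_neq0 hq N'.
  have hq3 := qp_neq0 hq (k - i + M')%N; have hq4 := qp_neq0 hq (i + N')%N.
  move: hc1 hc2; rewrite !mulf_eq0 !negb_or => /andP[hc1 hc3] /andP[hc2 hc4].
  field.
  by rewrite hc1 hc2 hc3 hc4 hq1 hq2 hq3 hq4.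
- move/negbT: h; rewrite negb_and -!ltnNge => /orP [h | h].
  + by rewrite (ff_big q h) !(mulr0, mul0r).
  + by rewrite (ff_big q h) !(mulr0, mul0r).
Qed.

Lemma dsum (F : fieldType) (q b b' c c' : F)
  (hq : forall j, 1 - q ^+ j.+1 != 0)
  (hc : forall m, qpoch c q m != 0) (hc' : forall m, qpoch c' q m != 0)
  n (w A : nat -> F) M N :
  \sum_(k < n.+1) \sum_(i < k.+1) w k * qbinom q k i
     * (qpoch b q (k - i) * qpoch b' q i / (qpoch c q (k - i) * qpoch c' q i))
     * mulXY (k - i) i (phi2 q (A k) (b * q ^+ (k - i)) (b' * q ^+ i)
          (c * q ^+ (k - i)) (c' * q ^+ i) (q ^+ i) 1) M N
  = (qpoch b q M * qpoch b' q N / (qpoch c q M * qpoch c' q N)) / (qpoch q q M * qpoch q q N)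
    * \sum_(k < n.+1) w k * qpoch (A k) q (M + N - k) * ff q (M + N) k.
Proof.
rewrite big_distrr; apply: eq_bigr => k _.
rewrite (eq_bigr (fun i : 'I_k.+1 =>
  w k * (qpoch b q M * qpoch b' q N / (qpoch c q M * qpoch c' q N)) / (qpoch q q M * qpoch q q N)
    * qpoch (A k) q (M + N - k) * (gb q k i * ff q M (k - i) * ff q N i * (q ^+ i) ^+ (M - (k - i))))); last first.
  by move=> i _; apply: term_eq => //; rewrite -ltnS.
rewrite -big_distrr /= vdm //; ring.
Qed.

Lemma phi2E (F : fieldType) (q a b b' c c' : F) M N :
  phi2 q a b b' c c' 1 1 M N =
  qpoch a q (M + N) * qpoch b q M * qpoch b' q N
  / (qpoch q q M * qpoch q q N * qpoch c q M * qpoch c' q N).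
Proof. by rewrite /phi2 !expr1n !mulr1. Qed.

Theorem theorem7 (R : realType) (q a b b' c c' : R[i]) (n : nat) :
  0 < `|q| -> `|q| < 1 ->
  (forall m : nat, qpoch c q m != 0) ->
  (forall m : nat, qpoch c' q m != 0) ->
  (forall M N : nat,
     phi2 q (a * q ^+ n) b b' c c' 1 1 M N =
     \sum_(k < n.+1) \sum_(i < k.+1)
       qbinom q n k * qbinom q k i
       * (qpoch b q (k - i) * qpoch b' q i / (qpoch c q (k - i) * qpoch c' q i))
       * q ^+ (2 * 'C(k, 2)) * a ^+ k
       * mulXY (k - i) i
           (phi2 q (a * q ^+ k) (b * q ^+ (k - i)) (b' * q ^+ i)
                 (c * q ^+ (k - i)) (c' * q ^+ i) (q ^+ i) 1) M N)
  /\
  (forall M N : nat,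
     phi2 q (a / q ^+ n) b b' c c' 1 1 M N =
     \sum_(k < n.+1) \sum_(i < k.+1)
       qbinom q n k * qbinom q k i
       * (qpoch b q (k - i) * qpoch b' q i / (qpoch c q (k - i) * qpoch c' q i))
       * (q ^+ 'C(k, 2) / q ^+ (n * k)) * (- a) ^+ k
       * mulXY (k - i) i
           (phi2 q a (b * q ^+ (k - i)) (b' * q ^+ i)
                 (c * q ^+ (k - i)) (c' * q ^+ i) (q ^+ i) 1) M N).
Proof.
move=> hq0' hq1 hc hc'.
have hq0 : q != 0 by rewrite -normr_gt0.
have hq : forall j, 1 - q ^+ j.+1 != 0.
  move=> j; rewrite subr_eq0; apply/eqP => E.
  have : `|q ^+ j.+1| < 1 by rewrite normrX expr_lt1.
  by rewrite -E normr1 ltxx.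
have hqM := qp_neq0 hq; have hcM := hc; have hcM' := hc'.
split=> M N.
- rewrite (eq_bigr (fun k : 'I_n.+1 => \sum_(i < k.+1)
     (qbinom q n k * q ^+ (2 * 'C(k, 2)) * a ^+ k) * qbinom q k i
     * (qpoch b q (k - i) * qpoch b' q i / (qpoch c q (k - i) * qpoch c' q i))
     * mulXY (k - i) i (phi2 q (a * q ^+ k) (b * q ^+ (k - i)) (b' * q ^+ i)
          (c * q ^+ (k - i)) (c' * q ^+ i) (q ^+ i) 1) M N)); last first.
    move=> k _; apply: eq_bigr => i _.
    move: (q ^+ (2 * 'C(k, 2))) => Q; ring.
  rewrite (dsum b b' hq hc hc' n (fun k => qbinom q n k * q ^+ (2 * 'C(k, 2)) * a ^+ k) (fun k => a * q ^+ k)).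
  rewrite phi2E id1 //.
  have -> : \sum_(k < n.+1) gb q n k * X1 q a (M + N) k =
            \sum_(k < n.+1) qbinom q n k * q ^+ (2 * 'C(k, 2)) * a ^+ k * qpoch (a * q ^+ k) q (M + N - k) * ff q (M + N) k.
    apply: eq_bigr => [[k hk]] _ /=; rewrite /gb /X1 -ltnS hk.
    move: (q ^+ (2 * 'C(k, 2))) => Q; ring.
  move: (hqM M) (hqM N) (hc M) (hc' N) => h1 h2 h3 h4.
  field; by rewrite h1 h2 h3 h4.
- rewrite (eq_bigr (fun k : 'I_n.+1 => \sum_(i < k.+1)
     (qbinom q n k * (q ^+ 'C(k, 2) / q ^+ (n * k)) * (- a) ^+ k) * qbinom q k i
     * (qpoch b q (k - i) * qpoch b' q i / (qpoch c q (k - i) * qpoch c' q i))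
     * mulXY (k - i) i (phi2 q a (b * q ^+ (k - i)) (b' * q ^+ i)
          (c * q ^+ (k - i)) (c' * q ^+ i) (q ^+ i) 1) M N)); last first.
    move=> k _; apply: eq_bigr => i _.
    move: (q ^+ 'C(k, 2) / q ^+ (n * k)) => Q; ring.
  rewrite (dsum b b' hq hc hc' n (fun k => qbinom q n k * (q ^+ 'C(k, 2) / q ^+ (n * k)) * (- a) ^+ k) (fun k => a)).
  rewrite phi2E id2 //.
  have -> : \sum_(k < n.+1) gb q n k / q ^+ (n * k) * X2 q a (M + N) k =
            \sum_(k < n.+1) qbinom q n k * (q ^+ 'C(k, 2) / q ^+ (n * k)) * (- a) ^+ k * qpoch a q (M + N - k) * ff q (M + N) k.
    apply: eq_bigr => [[k hk]] _ /=; rewrite /gb /X2 -ltnS hk.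
    move: (q ^+ 'C(k, 2)) (q ^+ (n * k)) => Q Q'; ring.
  move: (hqM M) (hqM N) (hc M) (hc' N) => h1 h2 h3 h4.
  field; by rewrite h1 h2 h3 h4.
Qed.
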